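(* For every irrational $\alpha>0$ there is a constant $C=C(\alpha)>0$ such that $\delta_{\min}^{(\alpha)}(N)\le C\,N^{-1/2}$ for all integers $N\ge2$.
   Context: For irrational $\alpha>0$, the numbers $\alpha m^2+n^2$ with integers $m,n\ge 1$ are pairwise distinct; list them in increasing order as $0<\lambda_1<\lambda_2<\cdots$. For $N\ge 2$ define $\delta_{\min}^{(\alpha)}(N)=\min\{\lambda_{i+1}-\lambda_i : 1\le i<N\}$. *)

(* Defs.v *)
From Stdlib Require Import Reals.
Open Scope R_scope.

Definition irrational (a : R) : Prop :=
  ~ exists (p q : Z), q <> 0%Z /\ a = IZR p / IZR q.

Definition in_spectrum (alpha x : R) : Prop :=
  exists m n : nat, (1 <= m)%nat /\ (1 <= n)%nat /\
    x = alpha * INR m ^ 2 + INR n ^ 2.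

(* lam is the increasing enumeration lambda_1 < lambda_2 < ... of that set
   (1-based: lam 1 is the smallest element; lam 0 is irrelevant). *)
Definition increasing_enum (alpha : R) (lam : nat -> R) : Prop :=
  (forall i : nat, (1 <= i)%nat -> lam i < lam (S i)) /\
  (forall x : R, in_spectrum alpha x <-> exists i : nat, (1 <= i)%nat /\ lam i = x).

(* delta_min lam N = min { lam (i+1) - lam i : 1 <= i < N }, for N >= 2
   (value 0 for N < 2 is a dummy). *)
Fixpoint delta_min (lam : nat -> R) (N : nat) : R :=
  match N with
  | O => 0
  | S k =>
    match k with
    | O => 0
    | S j =>
      match j with
      | O => lam 2%nat - lam 1%nat
      | S _ => Rmin (delta_min lam k) (lam N - lam k)
      end
    end
  end.

(* Main.v *)
Require Import Defs.
From Stdlib Require Import Reals Lra Lia List Arith ZArith Classical.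
Open Scope R_scope.

Lemma mono_lt a lam : increasing_enum a lam ->
  forall i k, (1 <= i)%nat -> (i < k)%nat -> lam i < lam k.
Proof.
  intros [Hinc _] i k Hi Hk. induction k as [|k IH]; [lia|].
  destruct (Nat.eq_dec i k) as [->|Hne]; [apply Hinc; lia|].
  assert (lam i < lam k) by (apply IH; lia). assert (lam k < lam (S k)) by (apply Hinc; lia). lra.
Qed.

Lemma mono_le a lam : increasing_enum a lam ->
  forall i k, (1 <= i)%nat -> (i <= k)%nat -> lam i <= lam k.
Proof.
  intros H i k Hi Hk. destruct (Nat.eq_dec i k) as [->|]; [lra|].
  left; apply (mono_lt a); auto; lia.
Qed.

Lemma dmin_le lam : forall N i, (1 <= i)%nat -> (i < N)%nat ->
  delta_min lam N <= lam (S i) - lam i.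
Proof.
  induction N as [|N IH]; intros i Hi HN; [lia|].
  destruct N as [|N]; [lia|]. destruct N as [|N].
  - assert (i = 1%nat) by lia; subst; simpl; lra.
  - change (delta_min lam (S (S (S N)))) with (Rmin (delta_min lam (S (S N))) (lam (S (S (S N))) - lam (S (S N)))).
    destruct (Nat.eq_dec i (S (S N))) as [->|Hne].
    + apply Rmin_r.
    + eapply Rle_trans; [apply Rmin_l|]. apply IH; lia.
Qed.

Lemma dmin_pair a lam x j N : increasing_enum a lam -> in_spectrum a x -> x < lam j ->
  (1 <= j)%nat -> (j <= N)%nat -> delta_min lam N <= lam j - x.
Proof.
  intros He Hx Hxj Hj HN. pose proof He as [Hinc Hsp].
  destruct (proj1 (Hsp x) Hx) as [i [Hi <-]].
  assert (i < j)%nat.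
  { destruct (Nat.lt_ge_cases i j) as [|Hge]; auto.
    pose proof (mono_le a lam He j i Hj Hge). lra. }
  pose proof (dmin_le lam N i Hi ltac:(lia)).
  pose proof (mono_le a lam He (S i) j ltac:(lia) ltac:(lia)). lra.
Qed.

Lemma nodup_inj {T} (f : nat -> T) : forall j s,
  (forall x y, (s <= x < s + j)%nat -> (s <= y < s + j)%nat -> f x = f y -> x = y) ->
  NoDup (map f (seq s j)).
Proof.
  induction j as [|j IH]; intros s Hinj; simpl; constructor.
  - intros Hin. apply in_map_iff in Hin as [x [Hx Hin]]. apply in_seq in Hin.
    assert (x = s) by (apply Hinj; [lia|lia|exact Hx]). lia.
  - apply IH. intros x y Hx Hy Hf; apply Hinj; [lia|lia|exact Hf].
Qed.

Lemma count a lam j M K : increasing_enum a lam -> (1 <= j)%nat ->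
  (forall m n, (1 <= m)%nat -> (1 <= n)%nat -> a * INR m ^ 2 + INR n ^ 2 <= lam j -> (m <= M /\ n <= K)%nat) ->
  (j <= M * K)%nat.
Proof.
  intros He Hj Hb.
  assert (Hnd : NoDup (map lam (seq 1 j))).
  { apply nodup_inj. intros x y Hx Hy Hxy.
    destruct (Nat.lt_trichotomy x y) as [H|[H|H]]; auto.
    - pose proof (mono_lt a lam He x y ltac:(lia) H); lra.
    - pose proof (mono_lt a lam He y x ltac:(lia) H); lra. }
  pose (L := map (fun pr : nat * nat => a * INR (fst pr) ^ 2 + INR (snd pr) ^ 2) (list_prod (seq 1 M) (seq 1 K))).
  assert (Hinc : incl (map lam (seq 1 j)) L).
  { intros z Hz. apply in_map_iff in Hz as [i [<- Hi]]. apply in_seq in Hi.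
    pose proof He as [Hm Hsp].
    destruct (proj2 (Hsp (lam i)) (ex_intro _ i (conj (proj1 Hi) eq_refl))) as [m [n [Hm1 [Hn1 Heq]]]].
    pose proof (mono_le a lam He i j ltac:(lia) ltac:(lia)).
    destruct (Hb m n Hm1 Hn1 ltac:(lra)) as [HM HK].
    apply in_map_iff. exists (m, n). split; [simpl; lra|].
    apply in_prod_iff; split; apply in_seq; lia. }
  pose proof (NoDup_incl_length Hnd Hinc). unfold L in H.
  rewrite !length_map, length_prod, !length_seq in H. exact H.
Qed.

Definition fr (a : R) (k : nat) := INR k * a - IZR (Int_part (INR k * a)).

Lemma fr_bounds a k : 0 <= fr a k < 1.
Proof. unfold fr. destruct (base_Int_part (INR k * a)). lra. Qed.

Lemma ip_bounds x Q : 0 <= x < INR Q -> (0 <= Int_part x)%Z /\ (Int_part x < Z.of_nat Q)%Z /\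
   IZR (Int_part x) <= x < IZR (Int_part x) + 1.
Proof.
  intros Hx. destruct (base_Int_part x) as [H1 H2].
  split; [|split].
  - assert (IZR (Int_part x) > -1) by lra. apply lt_IZR in H. lia.
  - apply lt_IZR. rewrite <- INR_IZR_INZ. lra.
  - lra.
Qed.

Lemma dirichlet a Q : (1 <= Q)%nat -> exists (q : nat) (p : Z),
  (1 <= q <= Q)%nat /\ Rabs (INR q * a - IZR p) < / INR Q.
Proof.
  intros HQ.
  destruct (classic (exists (q : nat) (p : Z), (1 <= q <= Q)%nat /\ Rabs (INR q * a - IZR p) < / INR Q)) as [H|H]; auto.
  exfalso.
  assert (HQr : 0 < INR Q) by (apply lt_0_INR; lia).
  pose (box k := Z.to_nat (Int_part (INR Q * fr a k))).
  assert (Hb : forall k, 0 <= INR Q * fr a k < INR Q).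
  { intro k. pose proof (fr_bounds a k). split; [nra|]. nra. }
  assert (Key : forall x y, (x < y <= Q)%nat -> box x = box y -> False).
  { intros x y Hxy Heq. apply H. exists (y - x)%nat, (Int_part (INR y * a) - Int_part (INR x * a))%Z.
    split; [lia|].
    destruct (ip_bounds _ _ (Hb x)) as [Hx0 [Hx1 Hx2]].
    destruct (ip_bounds _ _ (Hb y)) as [Hy0 [Hy1 Hy2]].
    unfold box in Heq. apply Z2Nat.inj in Heq; auto.
    rewrite Heq in Hx2.
    assert (Rabs (INR Q * fr a y - INR Q * fr a x) < 1) by (apply Rabs_def1; lra).
    unfold fr in H0. rewrite minus_INR by lia. rewrite minus_IZR.
    replace (INR Q * (INR y * a - IZR (Int_part (INR y * a))) - INR Q * (INR x * a - IZR (Int_part (INR x * a))))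
      with (INR Q * ((INR y - INR x) * a - (IZR (Int_part (INR y * a)) - IZR (Int_part (INR x * a))))) in H0 by ring.
    rewrite Rabs_mult, Rabs_right in H0 by lra.
    apply (Rmult_lt_reg_l (INR Q)); auto. rewrite Rinv_r by lra. exact H0. }
  assert (Hnd : NoDup (map box (seq 0 (S Q)))).
  { apply nodup_inj. intros x y Hx Hy Hf.
    destruct (Nat.lt_trichotomy x y) as [Hl|[Hl|Hl]]; auto; exfalso.
    - apply (Key x y); [lia|exact Hf].
    - apply (Key y x); [lia|symmetry; exact Hf]. }
  assert (Hinc : incl (map box (seq 0 (S Q))) (seq 0 Q)).
  { intros z Hz. apply in_map_iff in Hz as [k [<- _]]. apply in_seq.
    destruct (ip_bounds _ _ (Hb k)) as [H0 [H1 _]]. unfold box. lia. }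
  pose proof (NoDup_incl_length Hnd Hinc). rewrite length_map, !length_seq in H0. lia.
Qed.

Lemma small_gap a lam : increasing_enum a lam -> 0 < a -> lam 2%nat - lam 1%nat <= 3 * a.
Proof.
  intros He Ha. pose proof He as [Hinc Hsp].
  assert (Hl1 : a + 1 <= lam 1%nat).
  { destruct (proj2 (Hsp (lam 1%nat)) (ex_intro _ 1%nat (conj (le_n 1) eq_refl))) as [m [n [Hm [Hn ->]]]].
    apply le_INR in Hm, Hn. simpl in Hm, Hn. assert (1 <= INR m * INR m) by nra. assert (1 <= INR n * INR n) by nra. simpl. nra. }
  assert (Hz : forall z, in_spectrum a z -> z <> lam 1%nat -> lam 2%nat <= z).
  { intros z Hz Hne. destruct (proj1 (Hsp z) Hz) as [k [Hk <-]].
    apply (mono_le a lam He); [lia|]. destruct (Nat.eq_dec k 1); [subst; congruence|lia]. }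
  assert (S1 : in_spectrum a (a + 1)) by (exists 1%nat, 1%nat; simpl; repeat split; try lia; ring).
  assert (S4 : in_spectrum a (4 * a + 1)) by (exists 2%nat, 1%nat; simpl; repeat split; try lia; ring).
  destruct (Req_dec (lam 1%nat) (a + 1)) as [E|E].
  - assert (lam 2%nat <= 4 * a + 1) by (apply Hz; auto; lra). lra.
  - assert (lam 2%nat <= a + 1) by (apply Hz; auto). lra.
Qed.

Lemma nat_le_of_sq m M : INR m * INR m <= INR M * INR M -> (m <= M)%nat.
Proof.
  intros H. destruct (Nat.le_gt_cases m M) as [|Hg]; auto.
  assert (INR (S M) <= INR m) by (apply le_INR; lia). rewrite S_INR in H0.
  pose proof (pos_INR M). nra.
Qed.

Lemma sqrt_le_sq x b : 0 <= x -> 0 <= b -> x <= b * b -> sqrt x <= b.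
Proof.
  intros. rewrite <- (sqrt_square b) by auto. apply sqrt_le_1; nra.
Qed.

Theorem proposition2p2 :
  forall alpha : R, irrational alpha -> 0 < alpha ->
  exists C : R, 0 < C /\
    forall lam : nat -> R, increasing_enum alpha lam ->
    forall N : nat, (2 <= N)%nat ->
      delta_min lam N <= C * Rpower (INR N) (- (1 / 2)).
Proof.
  intros a Hirr Ha.
  destruct (INR_archimed 1 (a + / a + 1) ltac:(lra)) as [A HA].
  assert (Hia : 0 < / a) by (apply Rinv_0_lt_compat; lra).
  set (Ar := INR A) in *.
  assert (HA1 : 1 <= Ar) by lra. assert (HAa : a <= Ar) by lra. assert (HAi : / a <= Ar) by lra.
  assert (HaA : 1 <= a * Ar) by (rewrite <- (Rinv_r a) by lra; apply Rmult_le_compat_l; lra).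
  assert (A1 : (1 <= A)%nat) by (apply INR_le; simpl; change (INR A) with Ar; lra).
  set (D := (36 * A * A * A)%nat).
  assert (HD : (36 <= D)%nat) by (unfold D; nia).
  assert (HDr : INR D = 36 * Ar * Ar * Ar) by (unfold D, Ar; rewrite !mult_INR; simpl; ring).
  exists (16 * INR D + 3 * a * INR (D * (A + 1) * (A + 1))).
  assert (HD0 : 0 < INR D) by (apply lt_0_INR; lia).
  assert (HD1 : 0 <= INR (D * (A + 1) * (A + 1))) by apply pos_INR.
  split; [nra|].
  intros lam He N HN.
  replace (- (1 / 2)) with (- / 2) by field.
  assert (HNr : 0 < INR N) by (apply lt_0_INR; lia).
  rewrite Rpower_Ropp, Rpower_sqrt by lra.
  set (s := sqrt (INR N)).
  assert (Hs : 0 < s) by (apply sqrt_lt_R0; lra).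
  set (Q := Nat.sqrt (N / D)).
  destruct (Nat.sqrt_spec (N / D) ltac:(lia)) as [HQ1 HQ2]. fold Q in HQ1, HQ2.
  assert (HdivD : (D * (N / D) <= N)%nat) by (apply Nat.Div0.mul_div_le).
  assert (HNlt : (N < D * (S Q * S Q))%nat).
  { pose proof (Nat.div_mod N D ltac:(lia)). pose proof (Nat.mod_upper_bound N D ltac:(lia)). nia. }
  assert (Hgoal : forall X, X * s <= 16 * INR D + 3 * a * INR (D * (A + 1) * (A + 1)) ->
     X <= (16 * INR D + 3 * a * INR (D * (A + 1) * (A + 1))) * / s).
  { intros X HX. apply Rmult_le_reg_r with s; [lra|]. rewrite Rmult_assoc, Rinv_l by lra. lra. }
  destruct (Nat.le_gt_cases Q A) as [Hsm|Hbig].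
  -
    assert (HN0 : (N <= D * (A + 1) * (A + 1))%nat) by nia.
    assert (Hd : delta_min lam N <= 3 * a).
    { pose proof (dmin_le lam N 1 (le_n 1) ltac:(lia)). pose proof (small_gap a lam He Ha). lra. }
    apply Rle_trans with (3 * a); auto. apply Hgoal.
    assert (s <= INR N).
    { apply sqrt_le_sq; try lra. assert (1 <= INR N) by (apply (le_INR 1); lia). nra. }
    apply le_INR in HN0. nra.
  -
    set (Qr := INR Q).
    assert (HQA : Ar + 1 <= Qr) by (unfold Qr, Ar; rewrite <- S_INR; apply le_INR; lia).
    assert (HQ0 : 0 < Qr) by lra.
    assert (HaQ : / Qr < a).
    { assert (1 < a * Qr) by nra. apply (Rmult_lt_reg_l Qr); auto. rewrite Rinv_r by lra. lra. }
    destruct (dirichlet a Q ltac:(lia)) as [q [p [Hq Hqp]]]. fold Qr in Hqp.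
    set (qr := INR q) in *.
    assert (Hqr1 : 1 <= qr) by (apply (le_INR 1); lia).
    assert (HqrQ : qr <= Qr) by (apply le_INR; lia).
    apply Rabs_def2 in Hqp as [Hp1 Hp2].
    assert (Hp0 : (1 <= p)%Z).
    { assert (a <= qr * a) by nra. assert (Hz : 0 < IZR p) by lra. apply lt_IZR in Hz. lia. }
    set (pn := Z.to_nat p).
    assert (Hpn : IZR p = INR pn) by (unfold pn; rewrite INR_IZR_INZ, Z2Nat.id by lia; reflexivity).
    rewrite Hpn in Hp1, Hp2.
    assert (Hpn1 : (1 <= pn)%nat) by (unfold pn; lia).
    assert (Hpnr1 : 1 <= INR pn) by (apply (le_INR 1); lia).
    assert (Ei1 : INR (2 * q + 1) = 2 * qr + 1) by (rewrite plus_INR, mult_INR; simpl; unfold qr; ring).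
    assert (Ei2 : INR (2 * q - 1) = 2 * qr - 1) by (rewrite minus_INR by lia; rewrite mult_INR; simpl; unfold qr; ring).
    assert (Ej1 : INR (2 * pn - 1) = 2 * INR pn - 1) by (rewrite minus_INR by lia; rewrite mult_INR; simpl; ring).
    assert (Ej2 : INR (2 * pn + 1) = 2 * INR pn + 1) by (rewrite plus_INR, mult_INR; simpl; ring).
    set (x1 := a * INR (2 * q + 1) ^ 2 + INR (2 * pn - 1) ^ 2).
    set (x2 := a * INR (2 * q - 1) ^ 2 + INR (2 * pn + 1) ^ 2).
    assert (S1 : in_spectrum a x1) by (exists (2 * q + 1)%nat, (2 * pn - 1)%nat; repeat split; lia).
    assert (S2 : in_spectrum a x2) by (exists (2 * q - 1)%nat, (2 * pn + 1)%nat; repeat split; lia).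
    assert (Hdiff : x1 - x2 = 8 * (qr * a - INR pn)) by (unfold x1, x2; rewrite Ei1, Ei2, Ej1, Ej2; ring).
    assert (Hne : qr * a - INR pn <> 0).
    { intro E. apply Hirr. exists (Z.of_nat pn), (Z.of_nat q). split; [lia|].
      rewrite <- !INR_IZR_INZ. fold qr. field_simplify_eq; [lra|lra]. }
    assert (Hpb : INR pn <= Qr * Ar + 1).
    { assert (/ Qr <= 1) by (rewrite <- Rinv_1; apply Rinv_le_contravar; lra). nra. }
    set (B := 34 * Ar * Ar * Qr * Qr).
    assert (Hx1 : x1 <= B).
    { unfold x1, B. rewrite Ei1, Ej1. simpl.
      assert ((2*qr+1)*(2*qr+1) <= 9 * Qr * Qr) by nra.
      assert (2 * INR pn - 1 <= 5 * Qr * Ar) by nra.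
      assert (0 <= 2 * INR pn - 1) by lra.
      assert ((2 * INR pn - 1) * (2 * INR pn - 1) <= 25 * Qr * Qr * Ar * Ar) by nra.
      assert (a * ((2*qr+1)*(2*qr+1)) <= Ar * (9 * Qr * Qr)) by (apply Rmult_le_compat; nra).
      assert (Ar * (9 * Qr * Qr) <= 9 * Ar * Ar * Qr * Qr) by nra.
      nra. }
    assert (Hx2 : x2 <= B).
    { unfold x2, B. rewrite Ei2, Ej2. simpl.
      assert ((2*qr-1)*(2*qr-1) <= 9 * Qr * Qr) by nra.
      assert (2 * INR pn + 1 <= 5 * Qr * Ar) by nra.
      assert (0 <= 2 * INR pn + 1) by lra.
      assert ((2 * INR pn + 1) * (2 * INR pn + 1) <= 25 * Qr * Qr * Ar * Ar) by nra.
      assert (a * ((2*qr-1)*(2*qr-1)) <= Ar * (9 * Qr * Qr)) by (apply Rmult_le_compat; nra).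
      assert (Ar * (9 * Qr * Qr) <= 9 * Ar * Ar * Qr * Qr) by nra.
      nra. }
    assert (Fin : forall x y, in_spectrum a x -> in_spectrum a y -> x < y -> y <= B -> delta_min lam N <= y - x).
    { intros x y Sx Sy Hxy HyB. pose proof He as [_ Hsp].
      destruct (proj1 (Hsp y) Sy) as [j [Hj Ej]].
      rewrite <- Ej; apply (dmin_pair a lam x j N He Sx); try lia; try lra.
      assert (j <= (6 * A * A * Q) * (6 * A * Q))%nat.
      { apply (count a lam j _ _ He Hj). intros m n Hm Hn Hmn. rewrite Ej in Hmn.
        assert (Hm0 : 0 <= a * INR m ^ 2) by (pose proof (pos_INR m); nra).
        assert (Hn0 : 0 <= INR n ^ 2) by (pose proof (pos_INR n); nra).
        split; apply nat_le_of_sq; rewrite !mult_INR; simpl; fold Ar Qr.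
        - assert (INR m * INR m <= Ar * (a * INR m ^ 2)) by (simpl; pose proof (pos_INR m); nra).
          assert (Ar * (a * INR m ^ 2) <= Ar * B) by (apply Rmult_le_compat_l; lra).
          unfold B in *. nra.
        - unfold B in *. simpl in Hn0, Hmn. nra. }
      assert ((6 * A * A * Q) * (6 * A * Q) = D * (Q * Q))%nat by (unfold D; ring).
      nia. }
    assert (Hs2 : s <= 2 * INR D * Qr).
    { apply sqrt_le_sq; [lra|nra|]. apply lt_INR in HNlt. rewrite !mult_INR, !S_INR in HNlt. fold Qr in HNlt. assert (E1 : (Qr+1)*(Qr+1) <= 4*Qr*Qr) by nra. assert (E2 : INR D * ((Qr+1)*(Qr+1)) <= INR D * (4*Qr*Qr)) by (apply Rmult_le_compat_l; lra). assert (E3 : 1 <= INR D) by (apply (le_INR 1); lia). assert (E4 : 0 <= 4 * Qr * Qr) by nra. assert (INR D * (4*Qr*Qr) <= INR D * INR D * (4 * Qr * Qr)) by nra. nra. }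
    assert (Hfin : 8 * / Qr <= (16 * INR D + 3 * a * INR (D * (A + 1) * (A + 1))) * / s).
    { apply Hgoal. assert (8 * / Qr * s <= 16 * INR D).
      { apply Rmult_le_reg_l with Qr; auto. replace (Qr * (8 * / Qr * s)) with (8 * s) by (field; lra). nra. }
      nra. }
    destruct (Rlt_or_le x1 x2) as [L|L].
    + pose proof (Fin x1 x2 S1 S2 L Hx2). apply Rle_trans with (x2 - x1); auto.
      apply Rle_trans with (8 * / Qr); auto. nra.
    + assert (L' : x2 < x1) by (destruct L; auto; exfalso; apply Hne; lra).
      pose proof (Fin x2 x1 S2 S1 L' Hx1). apply Rle_trans with (x1 - x2); auto.
      apply Rle_trans with (8 * / Qr); auto. nra.
Qed.
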